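(* Let $\Bbbk$ be a field of characteristic $0$, let $n\ge 2$, and let $(A,\mu,\alpha)$ be an $n$-ary totally Hom-associative algebra over $\Bbbk$ all of whose $n-1$ twisting maps are equal to a single linear map $\alpha\colon A\to A$. Let $[\cdot,\ldots,\cdot]\colon A^{\otimes n}\to A$ be the $n$-commutator bracket of $\mu$. Then $N(A)=(A,[\cdot,\ldots,\cdot],\alpha)$ (all $n-1$ twisting maps equal to $\alpha$) is an $n$-ary Hom-Nambu algebra. Moreover, if $(A,\mu,\alpha)$ is multiplicative, then so is $N(A)$.
   Context: An $n$-ary Hom-algebra $(V,\mu,(\alpha_1,\ldots,\alpha_{n-1}))$ is a $\Bbbk$-vector space $V$ with an $n$-linear map $\mu\colon V^{\otimes n}\to V$ (written $\mu(a_1,\ldots,a_n)=(a_1\cdots a_n)$) and linear maps $\alpha_1,\ldots,\alpha_{n-1}\colon V\to V$ (twisting maps). It is multiplicative if all twisting maps equal one map $\alpha$ and $\alpha\circ\mu=\mu\circ\alpha^{\otimes n}$. For $i\in\{1,\ldots,n-1\}$ the $i$th Hom-associator is the $(2n-1)$-linear map $as^i(a_1,\ldots,a_{2n-1})=(\alpha_1(a_1),\ldots,\alpha_{i-1}(a_{i-1}),(a_i\cdots a_{i+n-1}),\alpha_i(a_{i+n}),\ldots,\alpha_{n-1}(a_{2n-1}))-(\alpha_1(a_1),\ldots,\alpha_i(a_i),(a_{i+1}\cdots a_{i+n}),\alpha_{i+1}(a_{i+n+1}),\ldots,\alpha_{n-1}(a_{2n-1}))$. The Hom-algebra is $n$-ary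 totally Hom-associative if $as^i=0$ for all $i\in\{1,\ldots,n-1\}$. $n$-commutator words: in non-commuting variables $X_1,X_2,\ldots$, set $W_2=\{X_1X_2,-X_2X_1\}$ and for $n>2$, $W_n=\{zX_n,\,-X_nz : z\in W_{n-1}\}$ (so $|W_n|=2^{n-1}$). A word $w=\pm X_{i_1}\cdots X_{i_n}\in W_n$ acts by $w(a_1,\ldots,a_n)=\pm a_{i_1}\otimes\cdots\otimes a_{i_n}$. The $n$-commutator bracket is $[a_1,\ldots,a_n]=\sum_{w\in W_n}\mu(w(a_1,\ldots,a_n))$ (e.g. for $n=3$: $(a_1a_2a_3)-(a_2a_1a_3)-(a_3a_1a_2)+(a_3a_2a_1)$). For an $n$-ary Hom-algebra $(V,[\cdot,\ldots,\cdot],(\alpha_1,\ldots,\alpha_{n-1}))$, the $n$-ary Hom-Jacobian is $J(x_1,\ldots,x_{n-1};y_1,\ldots,y_n)=[\alpha_1(x_1),\ldots,\alpha_{n-1}(x_{n-1}),[y_1,\ldots,y_n]]-\sum_{i=1}^n[\alpha_1(y_1),\ldots,\alpha_{i-1}(y_{i-1}),[x_1,\ldots,x_{n-1},y_i],\alpha_i(y_{i+1}),\ldots,\alpha_{n-1}(y_n)]$, and $V$ is an $n$-ary Hom-Nambu algebra if $J=0$ identically. *)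

(* Defs.v *)
From HB Require Import structures.
From mathcomp Require Import all_boot all_order all_algebra.
Set Implicit Arguments. Unset Strict Implicit. Unset Printing Implicit Defensive.
Import GRing.Theory.
Local Open Scope ring_scope.

Section NaryHom.
Variables (R : fieldType) (V : lmodType R).

(* An n-ary operation is a map {ffun 'I_n -> V} -> V (argument i is slot i+1). *)

(* Apply an n-ary operation to the first n values of a sequence f : nat -> V
   (0-based: f 0 is a_1, f 1 is a_2, ...). *)
Definition app {n : nat} (m : {ffun 'I_n -> V} -> V) (f : nat -> V) : V :=
  m [ffun j : 'I_n => f (val j)].

Definition fext {n : nat} (a : {ffun 'I_n -> V}) : nat -> V :=
  fun k => match (insub k : option 'I_n) with Some i => a i | None => 0 end.

Definition upd {n : nat} (a : {ffun 'I_n -> V}) (i : 'I_n) (v : V) :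
  {ffun 'I_n -> V} := [ffun j => if j == i then v else a j].

Definition multilinear {n : nat} (m : {ffun 'I_n -> V} -> V) : Prop :=
  forall (i : 'I_n) (a : {ffun 'I_n -> V}) (c : R) (x y : V),
    m (upd a i (c *: x + y)) = c *: m (upd a i x) + m (upd a i y).

Definition assoc_args (n : nat) (m : {ffun 'I_n -> V} -> V) (alpha : V -> V)
  (p : nat) (a : nat -> V) : nat -> V :=
  fun j => if (j < p)%N then alpha (a j)
           else if (j == p)%N then app m (fun k => a (p + k)%N)
           else alpha (a (j + n - 1)%N).

(* i-th Hom-associator, i in {1,...,n-1} (1-based as in the paper), all
   twisting maps equal to alpha. *)
Definition hom_associator (n : nat) (m : {ffun 'I_n -> V} -> V) (alpha : V -> V)
  (i : nat) (a : nat -> V) : V :=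
  app m (assoc_args m alpha i.-1 a) - app m (assoc_args m alpha i a).

Definition totally_hom_assoc (n : nat) (m : {ffun 'I_n -> V} -> V)
  (alpha : V -> V) : Prop :=
  forall (i : nat) (a : nat -> V), (0 < i < n)%N -> hom_associator m alpha i a = 0.

Definition hom_multiplicative (n : nat) (m : {ffun 'I_n -> V} -> V)
  (alpha : V -> V) : Prop :=
  forall a : {ffun 'I_n -> V}, alpha (m a) = m [ffun j => alpha (a j)].

(* n-commutator words: words k = W_{k+1}, as (sign, list of 0-based variable
   indices); true = sign +, false = sign -. *)
Fixpoint words (k : nat) : seq (bool * seq nat) :=
  match k with
  | 0 => [:: (true, [:: 0%N])]
  | k'.+1 => flatten [seq [:: (w.1, rcons w.2 k); (~~ w.1, k :: w.2)]
                     | w <- words k']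
  end.

Definition commutator (n : nat) (m : {ffun 'I_n -> V} -> V)
  (a : {ffun 'I_n -> V}) : V :=
  \sum_(w <- words n.-1)
    (if w.1 then app m (fun j => fext a (nth 0%N w.2 j))
     else - app m (fun j => fext a (nth 0%N w.2 j))).

(* n-ary Hom-Jacobian with all twisting maps equal to alpha;
   x = (x_1..x_{n-1}) and y = (y_1..y_n) are 0-based. *)
Definition hom_jacobian (n : nat) (b : {ffun 'I_n -> V} -> V) (alpha : V -> V)
  (x y : nat -> V) : V :=
  app b (fun j => if (j < n.-1)%N then alpha (x j) else app b y)
  - \sum_(i < n)
      app b (fun j => if (j < i)%N then alpha (y j)
                      else if (j == i)%N then
                        app b (fun k => if (k < n.-1)%N then x k else y i)
                      else alpha (y j)).

Definition hom_nambu (n : nat) (b : {ffun 'I_n -> V} -> V) (alpha : V -> V) : Prop :=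
  forall x y : nat -> V, hom_jacobian b alpha x y = 0.

End NaryHom.

(* Main.v *)
Require Import Defs.
From HB Require Import structures.
From mathcomp Require Import all_boot all_order all_algebra.
From mathcomp Require Import zify.
Set Implicit Arguments. Unset Strict Implicit. Unset Printing Implicit Defensive.
Import GRing.Theory.
Local Open Scope ring_scope.

Section Formal.
Variables (R : fieldType) (V : lmodType R).

Definition Fm := seq (bool * seq V).
Definition sg (b : bool) (v : V) := if b then v else - v.
Definition ev (f : seq V -> V) (F : Fm) : V := \sum_(x <- F) sg x.1 (f x.2).
Definition feq (F G : Fm) := forall f, ev f F = ev f G.
Definition fneg (F : Fm) : Fm := [seq (~~ x.1, x.2) | x <- F].
Definition fmul (F G : Fm) : Fm := [seq (x.1 == y.1, x.2 ++ y.2) | x <- F, y <- G].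
Definition fone : Fm := [:: (true, [::])].
Definition fL (v : V) : Fm := [:: (true, [:: v])].
Definition fcomm (F G : Fm) : Fm := fmul F G ++ fneg (fmul G F).
Definition fword (A : nat -> Fm) (w : bool * seq nat) : Fm := foldr fmul fone (map A w.2).
Definition fsgn (b : bool) (F : Fm) : Fm := if b then F else fneg F.
Definition FBr (A : nat -> Fm) (k : nat) : Fm :=
  flatten [seq fsgn w.1 (fword A w) | w <- words k].

Lemma sgN b v : sg (~~ b) v = - sg b v.
Proof. by case: b; rewrite /= ?opprK. Qed.
Lemma sgD b u v : sg b (u + v) = sg b u + sg b v.
Proof. by case: b => //=; rewrite opprD. Qed.
Lemma sgO b v : sg b (- v) = - sg b v.
Proof. by case: b. Qed.
Lemma sg_sum b (I : Type) (s : seq I) (F : I -> V) :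
  sg b (\sum_(i <- s) F i) = \sum_(i <- s) sg b (F i).
Proof. by case: b => //=; rewrite sumrN. Qed.
Lemma sg_eq b c v : sg (b == c) v = sg b (sg c v).
Proof. by case: b; case: c; rewrite /= ?opprK. Qed.
Lemma sgC b c v : sg b (sg c v) = sg c (sg b v).
Proof. by case: b; case: c. Qed.

Lemma ev_cat f F G : ev f (F ++ G) = ev f F + ev f G.
Proof. by rewrite /ev big_cat. Qed.
Lemma ev_neg f F : ev f (fneg F) = - ev f F.
Proof. by rewrite /ev big_map -sumrN; apply: eq_bigr => x _; rewrite sgN. Qed.
Lemma ev_nil f : ev f [::] = 0.
Proof. by rewrite /ev big_nil. Qed.
Lemma ev_cons f x F : ev f (x :: F) = sg x.1 (f x.2) + ev f F.
Proof. by rewrite /ev big_cons. Qed.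
Lemma ev_fone f : ev f fone = f [::].
Proof. by rewrite ev_cons ev_nil addr0. Qed.
Lemma ev_ext f g F : (forall s, f s = g s) -> ev f F = ev g F.
Proof. by move=> H; apply: eq_bigr => x _; rewrite H. Qed.
Lemma ev_ext_in f g F : (forall x, x \in F -> f x.2 = g x.2) -> ev f F = ev g F.
Proof. by move=> H; apply: eq_big_seq => x Hx; rewrite H. Qed.
Lemma ev_add f g F : ev (fun s => f s + g s) F = ev f F + ev g F.
Proof. by rewrite /ev -big_split; apply: eq_bigr => x _; rewrite sgD. Qed.
Lemma ev_opp f F : ev (fun s => - f s) F = - ev f F.
Proof. by rewrite /ev -sumrN; apply: eq_bigr => x _; rewrite sgO. Qed.
Lemma ev_flatten (I : Type) f (G : I -> Fm) s :
  ev f (flatten [seq G x | x <- s]) = \sum_(x <- s) ev f (G x).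
Proof.
elim: s => [|x s IH] /=; first by rewrite ev_nil big_nil.
by rewrite ev_cat IH big_cons.
Qed.
Lemma ev_fsgn f b F : ev f (fsgn b F) = sg b (ev f F).
Proof. by case: b => //=; rewrite ev_neg. Qed.
Lemma ev_FBr f A k :
  ev f (FBr A k) = \sum_(w <- words k) sg w.1 (ev f (fword A w)).
Proof. by rewrite /FBr ev_flatten; apply: eq_bigr => w _; rewrite ev_fsgn. Qed.

Lemma ev_mull f F G : ev f (fmul F G) = ev (fun s => ev (fun t => f (s ++ t)) G) F.
Proof.
rewrite /ev /fmul big_allpairs_dep; apply: eq_bigr => x _.
by rewrite sg_sum; apply: eq_bigr => y _; rewrite sg_eq.
Qed.
Lemma ev_mulr f F G : ev f (fmul F G) = ev (fun t => ev (fun s => f (s ++ t)) F) G.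
Proof.
rewrite ev_mull /ev.
under eq_bigr do rewrite sg_sum.
rewrite exchange_big /=; apply: eq_bigr => y _.
by rewrite sg_sum; apply: eq_bigr => x _; rewrite sgC.
Qed.

Lemma ev_mulDr f A B C : ev f (fmul A (B ++ C)) = ev f (fmul A B) + ev f (fmul A C).
Proof. by rewrite !ev_mull -ev_add; apply: ev_ext => s; rewrite ev_cat. Qed.
Lemma ev_mulNr f A B : ev f (fmul A (fneg B)) = - ev f (fmul A B).
Proof. by rewrite !ev_mull -ev_opp; apply: ev_ext => s; rewrite ev_neg. Qed.
Lemma ev_mulDl f A B C : ev f (fmul (B ++ C) A) = ev f (fmul B A) + ev f (fmul C A).
Proof. by rewrite !ev_mulr -ev_add; apply: ev_ext => s; rewrite ev_cat. Qed.
Lemma ev_mulNl f A B : ev f (fmul (fneg B) A) = - ev f (fmul B A).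
Proof. by rewrite !ev_mulr -ev_opp; apply: ev_ext => s; rewrite ev_neg. Qed.

Definition t3 f A B C :=
  ev (fun s => ev (fun u => ev (fun t => f (s ++ u ++ t)) C) B) A.
Lemma ev_mulA1 f A B C : ev f (fmul A (fmul B C)) = t3 f A B C.
Proof. by rewrite ev_mull /t3; apply: ev_ext => s; rewrite ev_mull. Qed.
Lemma ev_mulA2 f A B C : ev f (fmul (fmul A B) C) = t3 f A B C.
Proof.
rewrite ev_mull ev_mull /t3; apply: ev_ext => s; apply: ev_ext => u.
by apply: ev_ext => t; rewrite catA.
Qed.

Lemma ev_mul1 f F : ev f (fmul F fone) = ev f F.
Proof. by rewrite ev_mull; apply: ev_ext => s; rewrite ev_fone cats0. Qed.

Lemma mul_congr f F F' G G' : feq F F' -> feq G G' ->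
  ev f (fmul F G) = ev f (fmul F' G').
Proof.
move=> HF HG; rewrite !ev_mull HF; apply: ev_ext => s; exact: HG.
Qed.

Lemma ev_comm f P c : ev f (fcomm P c) =
  ev (fun s => ev (fun t => f (s ++ t)) c - ev (fun t => f (t ++ s)) c) P.
Proof. by rewrite /fcomm ev_cat ev_neg ev_mull ev_mulr ev_add ev_opp. Qed.
Lemma ev_comm_r f c P : ev f (fcomm c P) =
  ev (fun s => ev (fun t => f (t ++ s)) c - ev (fun t => f (s ++ t)) c) P.
Proof. by rewrite /fcomm ev_cat ev_neg ev_mulr ev_mull ev_add ev_opp. Qed.
Lemma comm_congr_l f P P' c : feq P P' -> ev f (fcomm P c) = ev f (fcomm P' c).
Proof. by move=> H; rewrite !ev_comm H. Qed.
Lemma comm_congr_r f P P' c : feq P P' -> ev f (fcomm c P) = ev f (fcomm c P').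
Proof. by move=> H; rewrite !ev_comm_r H. Qed.

Lemma grp6 (a b c d e g : V) : a - b - (c - d) = a - e - (g - d) + (e - c - (b - g)).
Proof.
apply/eqP; rewrite -subr_eq0; apply/eqP.
rewrite !opprD !opprK !addrA.
rewrite (addrC _ (-a)) !addrA addNr add0r.
rewrite (addrAC _ g (-d)) (addrAC _ e (-d)) addrK.
rewrite (addrAC _ g (-e)) addrK.
rewrite (addrAC _ g c) (addrAC _ (-c) c) addrK.
rewrite (addrAC _ g b).
rewrite (addrC (-b)) addrK.
by rewrite subrr.
Qed.

Lemma jacobi f X Z c : ev f (fcomm X (fcomm Z c)) =
  ev f (fcomm (fcomm X Z) c) + ev f (fcomm Z (fcomm X c)).
Proof.
rewrite /fcomm !(ev_cat, ev_neg, ev_mulDr, ev_mulDl, ev_mulNr, ev_mulNl).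
rewrite !ev_mulA1 !ev_mulA2; exact: grp6.
Qed.

Lemma words_perm k w : w \in words k -> perm_eq w.2 (iota 0 k.+1).
Proof.
elim: k w => [|k IH] w; first by rewrite inE => /eqP ->.
have Hi : iota 0 k.+2 = iota 0 k.+1 ++ [:: k.+1] by rewrite -addn1 iotaD.
case/flatten_mapP => w' /IH Hp; rewrite !inE => /orP [] /eqP ->; rewrite Hi.
  by rewrite -cats1; apply: perm_cat Hp (perm_refl _).
change (perm_eq ([:: k.+1] ++ w'.2) (iota 0 k.+1 ++ [:: k.+1])).
rewrite perm_catC.
by apply: perm_cat Hp (perm_refl _).
Qed.

Lemma words_lt k w j : w \in words k -> j \in w.2 -> (j < k.+1)%N.
Proof.
by move=> /words_perm Hp; rewrite (perm_mem Hp) mem_iota.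
Qed.

Lemma FBr_ext A B k : (forall j, (j <= k)%N -> A j = B j) -> FBr A k = FBr B k.
Proof.
move=> H; rewrite /FBr; congr flatten; apply/eq_in_map => w Hw.
rewrite /fword; congr (fsgn _ (foldr _ _ _)); apply/eq_in_map => j Hj.
by apply: H; rewrite -ltnS; exact: words_lt Hw Hj.
Qed.

Lemma fword_congr A B (s : seq nat) : (forall j, feq (A j) (B j)) ->
  feq (foldr fmul fone (map A s)) (foldr fmul fone (map B s)).
Proof.
move=> H; elim: s => [|x s IH] f //=; exact: mul_congr.
Qed.

Lemma FBr_congr A B k : (forall j, feq (A j) (B j)) -> feq (FBr A k) (FBr B k).
Proof.
move=> H f; rewrite !ev_FBr; apply: eq_bigr => w _; congr sg.
exact: fword_congr.
Qed.

Lemma fold_assoc f G l :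
  ev f (foldr fmul G l) = ev f (fmul (foldr fmul fone l) G).
Proof.
elim: l f => [|a l IH] f /=.
  by rewrite ev_mull ev_fone.
rewrite ev_mull ev_mulA2 /t3; apply: ev_ext => s.
by rewrite IH ev_mull.
Qed.

Lemma FBr0 f A : ev f (FBr A 0) = ev f (A 0%N).
Proof. by rewrite /FBr /= cats0 ev_mul1. Qed.

Lemma FBr_rec f A k : ev f (FBr A k.+1) = ev f (fcomm (FBr A k) (A k.+1)).
Proof.
rewrite ev_FBr /= big_flatten /= big_map ev_comm ev_FBr.
apply: eq_bigr => w _.
rewrite big_cons big_cons big_nil addr0 /= sgN.
rewrite -ev_comm /fcomm ev_cat ev_neg sgD sgO.
congr (_ - _); congr sg.
  by rewrite /fword map_rcons foldr_rcons fold_assoc ev_mull ev_mull;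
     apply: ev_ext => s; rewrite ev_mul1.
Qed.

Lemma deriv k : forall X ys f, ev f (fcomm X (FBr ys k)) =
  \sum_(i < k.+1) ev f (FBr (fun j => if j == i then fcomm X (ys i) else ys j) k).
Proof.
elim: k => [|k IH] X ys f.
  rewrite big_ord1 FBr0 /=; apply: comm_congr_r => g; exact: FBr0.
rewrite (comm_congr_r _ _ (fun g => FBr_rec g ys k)) jacobi big_ord_recr /=.
congr (_ + _).
  rewrite ev_comm IH; apply: eq_bigr => i _.
  rewrite -ev_comm FBr_rec /=.
  by rewrite eq_sym ltn_eqF.
rewrite [RHS]FBr_rec eqxx; symmetry; apply: comm_congr_l => g.
by rewrite (@FBr_ext _ ys) // => j Hj; rewrite ifN // neq_ltn ltnS Hj.
Qed.


Lemma letters_fold f G (a : nat -> V) (s : seq nat) :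
  ev f (foldr fmul G (map (fun j => fL (a j)) s)) = ev (fun t => f (map a s ++ t)) G.
Proof.
elim: s f => [|j s IH] f //=.
by rewrite ev_mull ev_cons ev_nil addr0 /= IH.
Qed.

Lemma fword_L (a : nat -> V) (s : seq nat) :
  foldr fmul fone (map (fun j => fL (a j)) s) = [:: (true, map a s)].
Proof. by elim: s => //= j s ->. Qed.

Lemma FBr_size (a : nat -> V) k x : x \in FBr (fun j => fL (a j)) k -> size x.2 = k.+1.
Proof.
case/flatten_mapP => w Hw; rewrite /fword fword_L.
have Hs : size (map a w.2) = k.+1 by rewrite size_map (perm_size (words_perm Hw)) size_iota.
by case: (w.1) => /=; rewrite inE => /eqP ->.
Qed.

End Formal.

Section Main.
Variables (R : fieldType) (V : lmodType R) (n : nat)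
  (mu : {ffun 'I_n -> V} -> V) (alpha : {linear V -> V}).
Hypothesis Hml : multilinear mu.
Hypothesis Hta : totally_hom_assoc mu alpha.

Lemma app_congr (m : {ffun 'I_n -> V} -> V) f g :
  (forall j, (j < n)%N -> f j = g j) -> app m f = app m g.
Proof. move=> H; rewrite /app; congr (m _); apply/ffunP => j; rewrite !ffunE; exact: H (ltn_ord j). Qed.

Lemma fextE (f : nat -> V) k : (k < n)%N -> fext [ffun j : 'I_n => f (val j)] k = f k.
Proof.
move=> Hk; rewrite /fext; case: insubP => [u _ <-|]; first by rewrite ffunE.
by rewrite Hk.
Qed.

Definition M (s : seq V) := app mu (fun j => nth 0 s j).
Definition T (s : seq V) := app mu (assoc_args mu alpha 0 (fun j => nth 0 s j)).

Lemma slot_ev p (g : nat -> V) (f : seq V -> V) F : (p < n)%N ->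
  app mu (fun j => if j == p then ev f F else g j) =
  ev (fun c => app mu (fun j => if j == p then f c else g j)) F.
Proof.
move=> Hp.
pose h v := app mu (fun j => if j == p then v else g j).
have hE : forall v, h v = mu (upd [ffun j : 'I_n => g (val j)] (Ordinal Hp) v).
  move=> v; rewrite /h /app; congr mu; apply/ffunP => j; rewrite !ffunE.
  by rewrite -val_eqE /=.
have hL : forall c x y, h (c *: x + y) = c *: h x + h y by move=> c x y; rewrite !hE Hml.
have h0 : h 0 = 0.
  by have := hL (-1) 0 0; rewrite !scaleN1r oppr0 addr0 addNr.
have hD : forall x y, h (x + y) = h x + h y.
  by move=> x y; have := hL 1 x y; rewrite !scale1r.
have hN : forall x, h (- x) = - h x.
  by move=> x; have := hL (-1) x 0; rewrite h0 !addr0 !scaleN1r.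
have hs : forall b x, h (sg b x) = sg b (h x) by case=> x //=; rewrite hN.
change (h (ev f F) = ev (fun c => h (f c)) F); elim: F => [|x F IH]; first by rewrite !ev_nil h0.
by rewrite !ev_cons hD IH hs.
Qed.

Lemma assoc0 p a : (p < n)%N ->
  app mu (assoc_args mu alpha p a) = app mu (assoc_args mu alpha 0 a).
Proof.
elim: p => [//|p IH] Hp.
have := Hta a (_ : (0 < p.+1 < n)%N); rewrite /hom_associator /= => /(_ Hp) /eqP.
by rewrite subr_eq0 => /eqP <-; apply: IH; exact: ltnW.
Qed.

Lemma slot pre c suf : size c = n -> (size pre + size suf)%N.+1 = n ->
  app mu (fun j => if j == size pre then M c else if (j < size pre)%N
    then alpha (nth 0 pre j) else alpha (nth 0 suf (j - size pre)%N.-1)) =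
  T (pre ++ c ++ suf).
Proof.
move=> Hc Hs; rewrite /T -(@assoc0 (size pre)); last by rewrite -Hs ltnS leq_addr.
apply: app_congr => j Hj; rewrite /assoc_args.
case: (ltngtP j (size pre)) => Hjp.
- by rewrite nth_cat Hjp.
- rewrite nth_cat (_ : (j + n - 1 < size pre)%N = false); last by lia.
  rewrite nth_cat Hc (_ : (j + n - 1 - size pre < n)%N = false); last by lia.
  congr (alpha (nth _ _ _)); rewrite -subn1; move: Hjp; move: (size pre) => sp Hjp; clear -Hjp; lia.
- rewrite /M; apply: app_congr => k Hk.
  by rewrite nth_cat ltnNge leq_addr /= addKn nth_cat Hc Hk.
Qed.

Lemma K (a : nat -> V) q F : (q < n)%N -> (forall x, x \in F -> size x.2 = n) ->
  app (commutator mu) (fun j => if j == q then ev M F else alpha (a j)) =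
  ev T (FBr (fun j => if j == q then F else fL (a j)) n.-1).
Proof.
move=> Hq HF.
have Hn : n.-1.+1 = n by lia.
rewrite /app /commutator ev_FBr.
apply: eq_big_seq => -[b s] Hw.
have := words_perm Hw; rewrite Hn /= => Hp.
have Hsz : size s = n by rewrite (perm_size Hp) size_iota.
have Hlt : forall j, j \in s -> (j < n)%N by move=> j; rewrite (perm_mem Hp) mem_iota.
have Hu : uniq s by rewrite (perm_uniq Hp) iota_uniq.
have Hqs : q \in s by rewrite (perm_mem Hp) mem_iota.
suff E : app mu (fun j => fext [ffun j : 'I_n => if val j == q then ev M F else alpha (a (val j))] (nth 0%N s j)) =
  ev T (fword (fun j => if j == q then F else fL (a j)) (b, s)).
  by rewrite -E; case: (b).
move: Hsz Hlt Hu; case/splitPr: Hqs => p1 p2 Hsz Hlt Hu.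
have [Hq1 Hq2] : q \notin p1 /\ q \notin p2.
  by move: Hu; rewrite cat_uniq /= negb_or; case/and3P => _ /andP [? _] /andP [? _].
have Hs : (size p1 + size p2)%N.+1 = n by rewrite -Hsz size_cat /= addnS.
have Hp1 : (size p1 < n)%N by move: Hs; move: (size p1) (size p2) => l1 l2 H; lia.
transitivity (app mu (fun j => if j == size p1 then ev M F else
   if (j < size p1)%N then alpha (nth 0 (map a p1) j)
   else alpha (nth 0 (map a p2) (j - size p1)%N.-1))).
  apply: app_congr => j Hj.
  rewrite (fextE (fun j => if j == q then ev M F else alpha (a j))); last first.
    by apply: Hlt; rewrite mem_nth // Hsz.
  case: (ltngtP j (size p1)) => Hj1.
  - rewrite nth_cat Hj1 (nth_map 0%N) //.
    have : nth 0%N p1 j \in p1 := mem_nth 0%N Hj1.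
    by case: eqP => // ->; rewrite (negbTE Hq1).
  - rewrite nth_cat ltnNge (ltnW Hj1) /=.
    have -> : (j - size p1 = (j - size p1)%N.-1.+1)%N by move: Hj1; move: (size p1) => l1 H; lia.
    rewrite /= (nth_map 0%N); last by (move: Hs Hj Hj1; move: (size p1) (size p2) => l1 l2 H1 H2 H3; lia).
    have : nth 0%N p2 (j - size p1)%N.-1 \in p2 by apply: mem_nth; (move: Hs Hj Hj1; move: (size p1) (size p2) => l1 l2 H1 H2 H3; lia).
    by case: eqP => // ->; rewrite (negbTE Hq2).
  - by rewrite Hj1 nth_cat ltnn subnn /= !eqxx.
rewrite (@slot_ev (size p1) (fun j => if (j < size p1)%N then alpha (nth 0 (map a p1) j)
   else alpha (nth 0 (map a p2) (j - size p1)%N.-1))) //.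
rewrite /fword /= map_cat foldr_cat /= eqxx.
have -> : map (fun j => if j == q then F else fL (a j)) p1 = map (fun j => fL (a j)) p1.
  apply/eq_in_map => j Hj; have Hjq : j != q by apply: contraNneq Hq1 => <-.
  by rewrite (negbTE Hjq).
have -> : map (fun j => if j == q then F else fL (a j)) p2 = map (fun j => fL (a j)) p2.
  apply/eq_in_map => j Hj; have Hjq : j != q by apply: contraNneq Hq2 => <-.
  by rewrite (negbTE Hjq).
rewrite letters_fold ev_mull; apply: ev_ext_in => x Hx.
rewrite letters_fold ev_fone cats0.
rewrite -(@slot (map a p1) x.2 (map a p2) (HF _ Hx)); last by rewrite !size_map.
by rewrite !size_map.
Qed.

Lemma K1 (a : nat -> V) : (0 < n)%N ->
  app (commutator mu) a = ev M (FBr (fun j => fL (a j)) n.-1).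
Proof.
move=> Hn0; have Hn : n.-1.+1 = n by lia.
rewrite /app /commutator ev_FBr.
apply: eq_big_seq => -[b s] Hw.
have := words_perm Hw; rewrite Hn /= => Hp.
have Hsz : size s = n by rewrite (perm_size Hp) size_iota.
have Hlt : forall j, j \in s -> (j < n)%N by move=> j; rewrite (perm_mem Hp) mem_iota.
suff E : app mu (fun j => fext [ffun j : 'I_n => a (val j)] (nth 0%N s j)) =
  ev M (fword (fun j => fL (a j)) (b, s)).
  by rewrite -E; case: (b).
rewrite /fword /= fword_L ev_cons ev_nil addr0 /= /M.
apply: app_congr => j Hj; rewrite fextE; last by apply: Hlt; rewrite mem_nth // Hsz.
by rewrite (nth_map 0%N) // Hsz.
Qed.

End Main.

Theorem theorem4p5 (R : fieldType) (V : lmodType R) (n : nat)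
  (mu : {ffun 'I_n -> V} -> V) (alpha : {linear V -> V}) :
  [pchar R] =i pred0 ->
  (2 <= n)%N ->
  multilinear mu ->
  totally_hom_assoc mu alpha ->
  hom_nambu (commutator mu) alpha /\
  (hom_multiplicative mu alpha -> hom_multiplicative (commutator mu) alpha).
Proof.
move=> _ Hn Hml Hta; split; last first.
  move=> Hmul a; rewrite /commutator raddf_sum; apply: eq_bigr => w _.
  have E : forall s : seq nat, alpha (app mu (fun j => fext a (nth 0%N s j))) =
      app mu (fun j => fext [ffun j => alpha (a j)] (nth 0%N s j)).
    move=> s; rewrite /app Hmul; congr (mu _); apply/ffunP => j; rewrite !ffunE /fext.
    by case: insubP => [u _ _|_]; rewrite ?ffunE ?linear0.
  case: (w.1); [exact: E|]; rewrite raddfN; congr (- _); exact: E.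
move: mu Hml Hta; case: n Hn => [|[|m]] // _ mu Hml Hta x y.
rewrite /hom_jacobian /=.
apply/eqP; rewrite subr_eq0; apply/eqP.
set X := FBr (fun j => fL (x j)) m.
set Y := FBr (fun j => fL (y j)) m.+1.
have HY : app (commutator mu) y = ev (M mu) Y by rewrite K1.
rewrite (@app_congr _ _ _ _ _ (fun j => if j == m.+1 then ev (M mu) Y else alpha (x j))); last first.
  move=> j Hj; rewrite -HY; case: ltnP => H; first by rewrite ifN // ltn_eqF.
  by rewrite ifT // eqn_leq H -ltnS Hj.
rewrite K //; last by move=> z; exact: FBr_size.
rewrite FBr_rec eqxx (FBr_ext (B := fun j => fL (x j))); last first.
  by move=> j Hj; rewrite ifN // neq_ltn ltnS Hj.
rewrite -/X deriv; apply: eq_bigr => i _.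
set C := fun k => if (k < m.+1)%N then x k else y i.
rewrite (@K1 _ _ _ _ C) //.
rewrite (@app_congr _ _ _ _ _ (fun j => if j == i then ev (M mu) (FBr (fun j => fL (C j)) m.+1) else alpha (y j))); last first.
  by move=> j Hj; case: ltngtP.
rewrite K //; last by move=> z; exact: FBr_size.
symmetry; apply: FBr_congr => j; case: eqP => // _ f.
rewrite FBr_rec /C /= ltnn; apply: comm_congr_l => g.
by rewrite (FBr_ext (B := fun j => fL (x j))) // => k Hk; rewrite ltnS Hk.
Qed.
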